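(* Let $m\ge0$, let $f:\mathbb{R}^n\to\mathbb{R}$ be $m$-weakly convex, let $x\in\mathbb{R}^n$, $\rho>0$, $\alpha=m+\rho$, and $\Delta:=f(x)-f_\alpha(x)$. Let $\hat x=\arg\min_y\{f(y)+\frac\alpha2\|y-x\|^2\}$ and $w=\rho(x-\hat x)$. Then $w\in\partial_\Delta f(x)$ and $\|w\|\le\sqrt{2\rho\Delta}$; consequently $x$ is a $(\sqrt{2\rho\Delta},\Delta)$-inexact stationary point (i.e. $\mathrm{dist}(0,\partial_\Delta f(x))\le\sqrt{2\rho\Delta}$), and $x$ is a $(\sqrt{2\alpha^2\Delta/\rho},\alpha)$-Moreau stationary point.
   Context: A function $f$ is $m$-weakly convex ($m\ge 0$) if $x\mapsto f(x)+\frac{m}{2}\|x\|^2$ is convex. For $\epsilon\ge 0$, $\partial_\epsilon f(x)=\{v\in\mathbb{R}^n: f(y)\ge f(x)+\langle v,y-x\rangle-\frac{m}{2}\|y-x\|^2-\epsilon\ \ \forall y\}$. A point $x$ is an $(\eta,\epsilon)$-inexact stationary point if $\mathrm{dist}(0,\partial_\epsilon f(x))\le\eta$. For $\rho>m$ the Moreau envelope is $f_\rho(x)=\inf_{y}\{f(y)+\frac{\rho}{2}\|y-x\|^2\}$, continuously differentiable with $\nabla f_\rho(x)=\rho(x-\hat x)$; $x$ is a $(\delta,\alpha)$-Moreau stationary point if $\|\nabla f_\alpha(x)\|\le\delta$. *)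

(* Defs.v *)
From HB Require Import structures.
From mathcomp Require Import all_boot all_order all_algebra.
From mathcomp Require Import all_classical all_reals.
Set Implicit Arguments. Unset Strict Implicit. Unset Printing Implicit Defensive.
Import Order.TTheory GRing.Theory Num.Theory.
Local Open Scope classical_set_scope.
Local Open Scope ring_scope.

Section Defs.
Variables (R : realType) (n : nat).
Implicit Types (u v x y : 'rV[R]_n).

Definition dotp u v : R := \sum_(i < n) u ord0 i * v ord0 i.
Definition enorm u : R := Num.sqrt (dotp u u).

Definition convex_fun (g : 'rV[R]_n -> R) : Prop :=
  forall x y (t : R), 0 <= t -> t <= 1 ->
    g (t *: x + (1 - t) *: y) <= t * g x + (1 - t) * g y.

Definition weakly_convex (m : R) (f : 'rV[R]_n -> R) : Prop :=
  convex_fun (fun x => f x + m / 2 * enorm x ^+ 2).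

Definition eps_subdiff (m : R) (f : 'rV[R]_n -> R) (x : 'rV[R]_n) (eps : R)
  : set 'rV[R]_n :=
  [set v | forall y, f x + dotp v (y - x) - m / 2 * enorm (y - x) ^+ 2 - eps <= f y].

Definition dist0 (S : set 'rV[R]_n) : R := inf [set enorm v | v in S].

Definition inexact_stationary (m : R) (f : 'rV[R]_n -> R) (x : 'rV[R]_n)
  (eta eps : R) : Prop :=
  dist0 (eps_subdiff m f x eps) <= eta.

Definition moreau (f : 'rV[R]_n -> R) (rho : R) (x : 'rV[R]_n) : R :=
  inf [set f y + rho / 2 * enorm (y - x) ^+ 2 | y in [set: 'rV[R]_n]].

Definition is_prox_argmin (f : 'rV[R]_n -> R) (rho : R) (x xhat : 'rV[R]_n)
  : Prop :=
  forall y, f xhat + rho / 2 * enorm (xhat - x) ^+ 2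
            <= f y + rho / 2 * enorm (y - x) ^+ 2.

Definition is_gradient (F : 'rV[R]_n -> R) (x g : 'rV[R]_n) : Prop :=
  forall e : R, 0 < e -> exists2 d : R, 0 < d &
    forall h, enorm h < d -> `|F (x + h) - F x - dotp g h| <= e * enorm h.

Definition moreau_stationary (f : 'rV[R]_n -> R) (x : 'rV[R]_n)
  (delta alpha : R) : Prop :=
  exists g, is_gradient (moreau f alpha) x g /\ enorm g <= delta.

End Defs.

(* Main.v *)
Require Import Defs.
From HB Require Import structures.
From mathcomp Require Import all_boot all_order all_algebra.
From mathcomp Require Import all_classical all_reals.
From mathcomp Require Import ring lra.
Import Order.TTheory GRing.Theory Num.Theory.
Local Open Scope ring_scope.

Section Aux.
Variables (R : realType) (n : nat).
Implicit Types (u v w : 'rV[R]_n).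

Lemma dotpDl u v w : dotp (u + v) w = dotp u w + dotp v w.
Proof. rewrite /dotp -big_split /=; apply: eq_bigr => i _; by rewrite mxE mulrDl. Qed.
Lemma dotpZl (a : R) u w : dotp (a *: u) w = a * dotp u w.
Proof. rewrite /dotp mulr_sumr; apply: eq_bigr => i _; by rewrite mxE mulrA. Qed.
Lemma dotpC u v : dotp u v = dotp v u.
Proof. rewrite /dotp; apply: eq_bigr => i _; by rewrite mulrC. Qed.
Lemma dotpNl u w : dotp (- u) w = - dotp u w.
Proof. by rewrite -scaleN1r dotpZl mulN1r. Qed.
Lemma dotpBl u v w : dotp (u - v) w = dotp u w - dotp v w.
Proof. by rewrite dotpDl dotpNl. Qed.
Lemma dotpDr u v w : dotp w (u + v) = dotp w u + dotp w v.
Proof. by rewrite dotpC dotpDl !(dotpC w). Qed.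
Lemma dotpBr u v w : dotp w (u - v) = dotp w u - dotp w v.
Proof. by rewrite dotpC dotpBl !(dotpC w). Qed.
Lemma dotpZr (a : R) u w : dotp w (a *: u) = a * dotp w u.
Proof. by rewrite dotpC dotpZl dotpC. Qed.
Lemma dotp_ge0 u : 0 <= dotp u u.
Proof. rewrite /dotp; apply: sumr_ge0 => i _; by rewrite -expr2 sqr_ge0. Qed.
Lemma enorm2 u : enorm u ^+ 2 = dotp u u.
Proof. by rewrite /enorm sqr_sqrtr // dotp_ge0. Qed.

Lemma qB u v : dotp (u - v) (u - v) = dotp u u - 2 * dotp u v + dotp v v.
Proof. rewrite !dotpBl !dotpBr (dotpC v u); ring. Qed.
Lemma qD u v : dotp (u + v) (u + v) = dotp u u + 2 * dotp u v + dotp v v.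
Proof. rewrite !dotpDl !dotpDr (dotpC v u); ring. Qed.

Lemma qconv (t : R) u v :
  dotp (t *: u + (1 - t) *: v) (t *: u + (1 - t) *: v) =
  t * dotp u u + (1 - t) * dotp v v - t * (1 - t) * dotp (u - v) (u - v).
Proof.
rewrite qB !dotpDl !dotpDr !dotpZl !dotpZr (dotpC v u); ring.
Qed.

Lemma lim_arg (D c : R) : 0 <= c ->
  (forall t : R, 0 < t -> t < 1 -> (1 - t) * c <= D) -> c <= D.
Proof.
move=> c0 H.
have h2 := H (1/2) ltac:(lra) ltac:(lra).
rewrite leNgt; apply/negP => Dc.
have c0' : 0 < c by lra.
have := H ((c - D) / (2 * c)).
have t0 : 0 < (c - D) / (2 * c) by apply: divr_gt0; lra.
have t1 : (c - D) / (2 * c) < 1.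
  by rewrite ltr_pdivrMr; lra.
move=> /(_ t0 t1).
have -> : (1 - (c - D) / (2 * c)) * c = c - (c - D) / 2.
  by field; lra.
lra.
Qed.

Lemma growth (m : R) (f : 'rV[R]_n -> R) (x xh : 'rV[R]_n) (rho : R) :
  0 < rho -> weakly_convex m f -> is_prox_argmin f (m + rho) x xh ->
  forall y, f xh + (m + rho) / 2 * dotp (xh - x) (xh - x)
            + rho / 2 * dotp (y - xh) (y - xh)
          <= f y + (m + rho) / 2 * dotp (y - x) (y - x).
Proof.
move=> rho0 wc am y.
set c := rho / 2 * dotp (y - xh) (y - xh).
have c0 : 0 <= c by apply: mulr_ge0; [lra|exact: dotp_ge0].
suff: c <= f y + (m + rho) / 2 * dotp (y - x) (y - x)
            - (f xh + (m + rho) / 2 * dotp (xh - x) (xh - x)) by lra.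
apply: lim_arg => // t t0 t1.
set z := t *: y + (1 - t) *: xh.
have Hc := wc y xh t (ltW t0) (ltW t1).
rewrite /= !enorm2 qconv in Hc.
have Harg := am z.
have Ez : z - x = t *: (y - x) + (1 - t) *: (xh - x).
  rewrite /z !scalerBr [(1 - t) *: x]scalerBl scale1r.
  by rewrite addrACA -opprD [t *: x + _]addrC subrK.
have E : (y - x) - (xh - x) = y - xh by rewrite opprB addrA subrK.
rewrite !enorm2 Ez qconv E in Harg.
rewrite /c.
set Q := dotp (y - xh) (y - xh) in Hc Harg *.
set qz := dotp z z in Hc.
suff : t * ((1 - t) * (rho / 2 * Q)) <=
   t * (f y + (m + rho) / 2 * dotp (y - x) (y - x) -
   (f xh + (m + rho) / 2 * dotp (xh - x) (xh - x))).
  by rewrite ler_pM2l.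
nra.
Qed.

Lemma moreau_ge (f : 'rV[R]_n -> R) a (x0 : 'rV[R]_n) L :
  (forall y, L <= f y + a / 2 * enorm (y - x0) ^+ 2) -> L <= moreau f a x0.
Proof.
move=> H; apply: lb_le_inf.
  by exists (f x0 + a / 2 * enorm (x0 - x0) ^+ 2); exists x0.
by move=> v [y _ <-].
Qed.

Lemma moreau_le (f : 'rV[R]_n -> R) a (x0 : 'rV[R]_n) L y :
  (forall y, L <= f y + a / 2 * enorm (y - x0) ^+ 2) ->
  moreau f a x0 <= f y + a / 2 * enorm (y - x0) ^+ 2.
Proof.
move=> H; apply: ge_inf; last by exists y.
by exists L => v [z _ <-].
Qed.
End Aux.
Arguments dotpDl {R n}.
Arguments dotpZl {R n}.
Arguments dotpC {R n}.
Arguments dotpNl {R n}.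
Arguments dotpBl {R n}.
Arguments dotpDr {R n}.
Arguments dotpBr {R n}.
Arguments dotpZr {R n}.
Arguments dotp_ge0 {R n}.
Arguments enorm2 {R n}.
Arguments qB {R n}.
Arguments qD {R n}.
Arguments qconv {R n}.
Theorem mainTheorem9 (R : realType) (n : nat) (m : R)
  (f : 'rV[R]_n -> R) (x : 'rV[R]_n) (rho : R) (xhat : 'rV[R]_n) :
  0 <= m -> weakly_convex m f -> 0 < rho ->
  let alpha := m + rho in
  let Delta := f x - moreau f alpha x in
  is_prox_argmin f alpha x xhat ->
  let w := rho *: (x - xhat) in
  [/\ eps_subdiff m f x Delta w,
      enorm w <= Num.sqrt (2 * rho * Delta),
      inexact_stationary m f x (Num.sqrt (2 * rho * Delta)) Delta &
      moreau_stationary f x (Num.sqrt (2 * alpha ^+ 2 * Delta / rho)) alpha].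
Proof.
move=> m0 wc rho0 alpha Delta am w.
have Hgr := @growth _ _ m f x xhat rho rho0 wc am.
set b := x - xhat.
have qxhat : dotp (xhat - x) (xhat - x) = dotp b b.
  by rewrite /b -opprB dotpNl dotpC dotpNl opprK.
set G := f xhat + alpha / 2 * dotp b b.
have Hmor : moreau f alpha x = G.
  apply/eqP; rewrite eq_le; apply/andP; split.
    by rewrite /G -qxhat -enorm2; apply: (@moreau_le _ _ f alpha x (f xhat + alpha / 2 * enorm (xhat - x) ^+ 2)); exact: am.
  by apply: (@moreau_ge _ _) => y; rewrite /G -qxhat -enorm2; exact: am.
have qb0 : 0 <= dotp b b by exact: dotp_ge0.
have HD : rho / 2 * dotp b b <= Delta.
  have q0 : dotp (x - x) (x - x) = 0.
    by rewrite subrr /dotp big1 // => i _; rewrite mxE mul0r.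
  have := Hgr x; rewrite q0 mulr0 addr0 -/alpha qxhat -/b.
  rewrite /Delta Hmor /G; lra.
have qw : dotp w w = rho ^+ 2 * dotp b b by rewrite /w dotpZl dotpZr; ring.
have P2 : enorm w <= Num.sqrt (2 * rho * Delta).
  rewrite /enorm; apply: ler_wsqrtr; rewrite qw.
  have : rho * (rho / 2 * dotp b b) <= rho * Delta by rewrite ler_pM2l.
  move=> h; rewrite expr2; lra.
have P1 : eps_subdiff m f x Delta w.
  move=> y /=; have := Hgr y.
  rewrite /Delta Hmor /G -/alpha qxhat !enorm2.
  have -> : y - xhat = (y - x) + b by rewrite /b addrA subrK.
  rewrite qD /w dotpZl (dotpC b).
  rewrite /alpha; nra.
split => //.
  rewrite /inexact_stationary /dist0; apply: le_trans P2.
  apply: ge_inf; last by exists w.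
  by exists 0 => v [u _ <-]; exact: sqrtr_ge0.
have a0 : 0 < alpha by rewrite /alpha; lra.
set c := alpha / rho.
have rc : rho * c = alpha by rewrite /c mulrC divfK //; lra.
have Low : forall h y, G + alpha * dotp b h - (alpha * c / 2 - alpha / 2) * dotp h h
    <= f y + alpha / 2 * enorm (y - (x + h)) ^+ 2.
  move=> h y; have H2 := Hgr y.
  set d := y - xhat in H2.
  have Eyx : y - x = d - b by rewrite /d /b opprB addrA subrK.
  rewrite qxhat Eyx qB in H2.
  have H1 := dotp_ge0 (d - c *: h).
  rewrite qB dotpZr dotpZl dotpZr in H1.
  have H1' : 0 <= rho / 2 * (dotp d d - 2 * (c * dotp d h) + c * (c * dotp h h)).
    by apply: mulr_ge0 => //; lra.
  have -> : y - (x + h) = (d - b) - h by rewrite -Eyx opprD addrA.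
  rewrite enorm2 (qB (d - b) h) (qB d b) dotpBl /G.
  have Ea : m + rho = rho * c by rewrite rc.
  rewrite Ea in H2; rewrite /alpha Ea.
  lra.
have Up : forall h, moreau f alpha (x + h) <= G + alpha * dotp b h + alpha / 2 * dotp h h.
  move=> h; apply: le_trans.
    by apply: (@moreau_le _ _ f alpha (x + h) (G + alpha * dotp b h - (alpha * c / 2 - alpha / 2) * dotp h h) xhat (Low h)).
  rewrite enorm2 /G.
  have -> : xhat - (x + h) = - (b + h) by rewrite /b !opprD opprK addrA (addrC xhat).
  rewrite dotpNl dotpC dotpNl opprK qD; lra.
have Lo : forall h, G + alpha * dotp b h - (alpha * c / 2 - alpha / 2) * dotp h h
     <= moreau f alpha (x + h).
  by move=> h; apply: (@moreau_ge _ _); exact: Low.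
have c0 : 0 < c by rewrite /c divr_gt0.
exists (alpha *: b); split.
  move=> e e0.
  set K := alpha / 2 + alpha * c / 2.
  have K0 : 0 < K by rewrite /K; nra.
  exists (e / K); first by rewrite divr_gt0.
  move=> h hd.
  have nh0 : 0 <= enorm h by exact: sqrtr_ge0.
  have qh : dotp h h = enorm h * enorm h by rewrite -enorm2 expr2.
  have Kh : K * enorm h <= e by rewrite mulrC -ler_pdivlMr //; exact: ltW.
  have qh0 : 0 <= dotp h h by exact: dotp_ge0.
  have := Up h; have := Lo h.
  rewrite Hmor dotpZl => H1 H2.
  have : `|moreau f alpha (x + h) - G - alpha * dotp b h| <= K * dotp h h.
    rewrite ler_norml; apply/andP; split; rewrite /K; nra.
  move=> H3; apply: le_trans H3 _.
  by rewrite qh mulrA; apply: ler_wpM2r.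
rewrite /enorm; apply: ler_wsqrtr; rewrite dotpZl dotpZr.
rewrite ler_pdivlMr //.
have h : alpha * alpha * (rho / 2 * dotp b b) <= alpha * alpha * Delta.
  by rewrite ler_pM2l // mulr_gt0.
rewrite expr2.
have E : rho / 2 * dotp b b * 2 = dotp b b * rho by field.
nra.
Qed.
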